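(* Let $f:H_0\to H_1$ be an injective homomorphism of free left $\bar k[\sigma]$-modules of finite rank with $n:=\dim_{\bar k}\operatorname{coker}(f)<\infty$. Then $\#\ker\big(f\bmod(\sigma-1)\big)\le q^n$, with equality if and only if $f\bmod\sigma$ is bijective.
   Context: $\bar k$ is the algebraic closure of $k=\mathbb F_q(T)$ (a perfect field). $\bar k[\sigma]$ is the noncommutative polynomial ring over $\bar k$ in $\sigma$ with $\sigma x=x^{q^{-1}}\sigma$ for $x\in\bar k$. For a homomorphism $f:H_0\to H_1$ of left $\bar k[\sigma]$-modules, $f\bmod\sigma:H_0/\sigma H_0\to H_1/\sigma H_1$ and $f\bmod(\sigma-1):H_0/(\sigma-1)H_0\to H_1/(\sigma-1)H_1$ are the induced maps. *)

(* Defs.v *)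
From HB Require Import structures.
From mathcomp Require Import all_boot all_order all_algebra.
Set Implicit Arguments. Unset Strict Implicit. Unset Printing Implicit Defensive.
Import GRing.Theory.
Local Open Scope ring_scope.

(* The skew polynomial ring kbar[sigma], with sigma x = tau x * sigma,       *)
(* where tau x = x^(q^-1).  An element  sum_i a_i sigma^i  is stored as the  *)
(* coefficient sequence of a {poly K} (only the additive structure of        *)
(* {poly K} is used; the multiplication is the skew one below).              *)
Definition skmul (K : fieldType) (tau : K -> K) (a b : {poly K}) : {poly K} :=
  \sum_(i < size a) \sum_(j < size b) (a`_i * iter i tau b`_j) *: 'X^(i + j).

(* The free left kbar[sigma]-module of rank r is kbar[sigma]^r, realised as *)
Definition smul (K : fieldType) (tau : K -> K) (r : nat) (a : {poly K})
  (v : 'rV[{poly K}]_r) : 'rV[{poly K}]_r := map_mx (skmul tau a) v.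

Definition skew_hom (K : fieldType) (tau : K -> K) (r0 r1 : nat)
  (f : 'rV[{poly K}]_r0 -> 'rV[{poly K}]_r1) : Prop :=
  ((forall v w, f (v + w) = f v + f w) /\
  (forall a v, f (smul tau a v) = smul tau a (f v))).

Definition in_aH (K : fieldType) (tau : K -> K) (r : nat) (a : {poly K})
  (w : 'rV[{poly K}]_r) : Prop := exists u, w = smul tau a u.

(* dim_kbar coker f = n : there are w_1..w_n in H1 whose classes form a     *)
(* kbar-basis of H1 / f(H0).  (kbar acts through constants c%:P = c sigma^0) *)
Definition coker_dim (K : fieldType) (r0 r1 : nat)
  (f : 'rV[{poly K}]_r0 -> 'rV[{poly K}]_r1) (n : nat) : Prop :=
  exists w : 'I_n -> 'rV[{poly K}]_r1,
    (forall x : 'rV[{poly K}]_r1, exists (c : 'I_n -> K) (v : 'rV[{poly K}]_r0),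
        x = \sum_(i < n) (c i)%:P *: w i + f v) /\
    (forall c : 'I_n -> K,
        (exists v, \sum_(i < n) (c i)%:P *: w i = f v) -> forall i, c i = 0).

(* Cardinality of a quotient S/E (S a predicate, E an equivalence on S):   *)
(* #(S/E) <= N  iff every family of pairwise E-inequivalent elements of S   *)
(* has at most N members; #(S/E) = N iff moreover such a family of exactly  *)
(* N members exists.                                                         *)
Definition quot_card_le (T : Type) (S : T -> Prop) (E : T -> T -> Prop)
  (N : nat) : Prop :=
  forall (m : nat) (x : 'I_m -> T), (forall i, S (x i)) ->
    (forall i j, i != j -> ~ E (x i) (x j)) -> (m <= N)%N.

Definition quot_card_eq (T : Type) (S : T -> Prop) (E : T -> T -> Prop)
  (N : nat) : Prop :=
  quot_card_le S E N /\
  exists x : 'I_N -> T, (forall i, S (x i)) /\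
    (forall i j, i != j -> ~ E (x i) (x j)).

(* ker (f mod (sigma - 1)) : classes v + (sigma-1)H0 with f v in (sigma-1)H1 *)
Definition ker_mod_sm1 (K : fieldType) (tau : K -> K) (r0 r1 : nat)
  (f : 'rV[{poly K}]_r0 -> 'rV[{poly K}]_r1) (v : 'rV[{poly K}]_r0) : Prop :=
  in_aH tau ('X - 1) (f v).

Definition cong_mod_sm1 (K : fieldType) (tau : K -> K) (r0 : nat)
  (v v' : 'rV[{poly K}]_r0) : Prop :=
  in_aH tau ('X - 1) (v - v').

Definition mod_sigma_bijective (K : fieldType) (tau : K -> K) (r0 r1 : nat)
  (f : 'rV[{poly K}]_r0 -> 'rV[{poly K}]_r1) : Prop :=
  (forall v v', in_aH tau 'X (f v - f v') -> in_aH tau 'X (v - v')) /\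
  (forall w, exists v, in_aH tau 'X (w - f v)).

(* Main.v *)
From HB Require Import structures.
From mathcomp Require Import all_boot all_order all_algebra all_field.
From mathcomp Require Import fraction ring zify.
Require Import Defs.
Import GRing.Theory.
Local Open Scope ring_scope.

Lemma subACA (V : zmodType) (a b c d : V) : (a - b) - (c - d) = (a - c) - (b - d).
Proof. by rewrite !opprD !opprK addrACA. Qed.

Lemma zmod_aux (V : zmodType) (a b x y z : V) : (a + x) - (b + y) = z -> a - b = z - x + y.
Proof. by move=> <-; rewrite opprD !addrA (addrAC _ x) (addrAC _ x) addrK subrK. Qed.

Section Frob.
Variables (F : finFieldType) (K : closedFieldType).
Variable iota : {rmorphism {fraction {poly F}} -> K}.
Variable tau : K -> K.
Hypothesis Htau : forall x : K, tau x ^+ #|F| = x.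

Local Notation q := #|F|.

Definition gF (a : F) : K := iota (tofrac (a%:P)).

Lemma gF_nat n : gF n%:R = n%:R.
Proof. by rewrite /gF polyC_natr rmorph_nat rmorph_nat. Qed.

Lemma charK : [pchar K].-nat q.
Proof.
have [p pr chp] := finPcharP F.
have cq : q = (p ^ logn p #|F|)%N := card_pprimeChar chp.
have chK : p \in [pchar K].
  apply/andP; split => //.
  by rewrite -gF_nat (pcharf0 chp) /gF tofrac0 rmorph0.
rewrite cq (eq_pnat _ (pcharf_eq chK)) pnatX pnat_id //.
Qed.

Lemma q_gt1 : (1 < q)%N.
Proof. by apply/card_gt1P; exists 0, 1; rewrite eq_sym oner_eq0. Qed.

Lemma q_gt0 : (0 < q)%N.
Proof. exact: ltnW q_gt1. Qed.

Lemma frobD (x y : K) : (x + y) ^+ q = x ^+ q + y ^+ q.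
Proof. exact: exprDn_pchar charK. Qed.

Lemma frobB (x y : K) : (x - y) ^+ q = x ^+ q - y ^+ q.
Proof. by apply/eqP; rewrite eq_sym subr_eq -frobD subrK. Qed.

Lemma frob_inj (x y : K) : x ^+ q = y ^+ q -> x = y.
Proof.
move=> h; apply/eqP; rewrite -subr_eq0.
by have := expf_eq0 (x - y) q; rewrite frobB h subrr eqxx q_gt0 /= => <-.
Qed.

Lemma tau_frob x : tau (x ^+ q) = x.
Proof. by apply: frob_inj; rewrite Htau. Qed.

Lemma tau_is_zmod : zmod_morphism tau.
Proof. by move=> x y; apply: frob_inj; rewrite frobB !Htau. Qed.

Lemma tau_is_monoid : monoid_morphism tau.
Proof.
split; first by apply: frob_inj; rewrite Htau expr1n.
by move=> x y; apply: frob_inj; rewrite exprMn !Htau.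
Qed.

Definition tauR := tau.
HB.instance Definition _ := GRing.isZmodMorphism.Build K K tauR tau_is_zmod.
HB.instance Definition _ := GRing.isMonoidMorphism.Build K K tauR tau_is_monoid.

Lemma tau0 : tau 0 = 0. Proof. exact: (rmorph0 tauR). Qed.
Lemma tau_eq0 x : (tau x == 0) = (x == 0).
Proof.
apply/eqP/eqP => [h|->]; last exact: tau0.
by rewrite -(Htau x) h expr0n; case: q q_gt0.
Qed.
Lemma tau_inj : injective tau.
Proof. by move=> x y h; rewrite -(Htau x) -(Htau y) h. Qed.

Lemma tau_fix x : (tau x == x) = (x ^+ q == x).
Proof.
apply/eqP/eqP => h; first by rewrite -{1}h Htau.
by rewrite -{1}h tau_frob.
Qed.

Lemma gF_inj : injective gF.
Proof.
move=> a b; rewrite /gF => /fmorph_inj /eqP.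
by rewrite tofrac_eq (inj_eq polyC_inj) => /eqP.
Qed.

Lemma gF_frob a : gF a ^+ q = gF a.
Proof. by rewrite /gF -!rmorphXn /= expf_card. Qed.

Lemma tau_gF a : tau (gF a) = gF a.
Proof. by apply/eqP; rewrite tau_fix gF_frob. Qed.

Lemma fix_gF (y : K) : y ^+ q = y -> exists a, gF a = y.
Proof.
move=> hy; case: (pickP (fun a => gF a == y)) => [a /eqP <-|none]; first by exists a.
exfalso.
pose P : {poly K} := 'X^q - 'X.
have szP : size P = q.+1.
  rewrite /P size_addl ?size_polyXn // size_opp size_polyX ltnS; exact: q_gt1.
have P0 : P != 0 by rewrite -size_poly_eq0 szP.
have rP z : z ^+ q = z -> root P z.
  by move=> hz; rewrite /root /P !hornerE hz subrr.
have H1 : all (root P) (y :: map gF (enum F)).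
  rewrite /= rP //=; apply/allP => _ /mapP [a _ ->]; apply: rP; exact: gF_frob.
have H2 : uniq (y :: map gF (enum F)).
  rewrite /= (map_inj_uniq gF_inj) enum_uniq andbT.
  by apply/mapP => [[a _ ha]]; have := none a; rewrite ha eqxx.
by have := max_poly_roots P0 H1 H2; rewrite /= size_map -cardE szP ltnn.
Qed.

Definition frobR (x : K) := x ^+ q.
Lemma frob_is_zmod : zmod_morphism frobR.
Proof. by move=> x y; rewrite /frobR frobB. Qed.
Lemma frob_is_monoid : monoid_morphism frobR.
Proof. by split; [rewrite /frobR expr1n | move=> x y; rewrite /frobR exprMn]. Qed.
HB.instance Definition _ := GRing.isZmodMorphism.Build K K frobR frob_is_zmod.
HB.instance Definition _ := GRing.isMonoidMorphism.Build K K frobR frob_is_monoid.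

Lemma artin_schreier (b : K) : exists s, s - tau s = b.
Proof.
pose P : {poly K} := 'X^q - 'X - (b ^+ q)%:P.
have szP : size P = q.+1.
  rewrite /P -addrA size_addl ?size_polyXn // -opprD size_opp.
  rewrite size_addl ?size_polyX ?size_polyC; last by case: (b ^+ q == 0).
  by rewrite ltnS; exact: q_gt1.
have [s] : exists s, root P s by apply/closed_rootP; rewrite szP; case: q q_gt1 => [|[]].
rewrite /root /P !hornerE subr_eq0 => /eqP h; exists s.
have : tauR (s ^+ q - s) = tauR (b ^+ q) by rewrite h.
by rewrite rmorphB /= /tauR !tau_frob.
Qed.

Local Notation tM A := (map_mx tauR A).
Local Notation fM A := (map_mx frobR A).

Lemma tM_fM m n (A : 'M[K]_(m, n)) : tM (fM A) = A.
Proof. by apply/matrixP => i j; rewrite !mxE /tauR /frobR tau_frob. Qed.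

Lemma fM_tM m n (A : 'M[K]_(m, n)) : fM (tM A) = A.
Proof. by apply/matrixP => i j; rewrite !mxE /tauR /frobR Htau. Qed.


Lemma fM_eq0 m n (A : 'M[K]_(m, n)) : fM A = 0 -> A = 0.
Proof.
move=> h; apply/matrixP => i j; move/matrixP: h => /(_ i j); rewrite !mxE /frobR.
by move/eqP; rewrite expf_eq0 => /andP [_ /eqP].
Qed.

Section Step1.
Variable N : nat.
Variable B : 'M[K]_N.+1.
Hypothesis Bu : B \in unitmx.

Definition rho (y : 'rV[K]_N.+1) := fM (y *m invmx B).

Lemma rhoD y y' : rho (y + y') = rho y + rho y'.
Proof. by rewrite /rho mulmxDl map_mxD. Qed.
Lemma rho0 : rho 0 = 0.
Proof. by rewrite /rho mul0mx map_mx0. Qed.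
Lemma rhoZ a y : rho (a *: y) = a ^+ q *: rho y.
Proof. by rewrite /rho -scalemxAl map_mxZ. Qed.
Lemma rho_sum k (G : 'I_k -> 'rV[K]_N.+1) : rho (\sum_(i < k) G i) = \sum_(i < k) rho (G i).
Proof. exact: (big_morph rho rhoD rho0). Qed.
Lemma rho_eq0 y : rho y = 0 -> y = 0.
Proof.
move=> /fM_eq0 h; have := mulmxKV Bu y; rewrite h mul0mx => <-; done.
Qed.
Lemma rho_fix y : rho y = y -> tM y *m B = y.
Proof.
rewrite /rho => h; have : tM (fM (y *m invmx B)) = tM y by rewrite h.
by rewrite tM_fM => <-; rewrite mulmxKV.
Qed.

Let e : 'rV[K]_N.+1 := delta_mx 0 0.
Let v k := iter k rho e.
Let span k := (\sum_(i < k) <<v i>>)%MS.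

Lemma e_neq0 : e != 0.
Proof. by apply/eqP => /matrixP /(_ 0 0); rewrite !mxE !eqxx /= => /eqP; rewrite oner_eq0. Qed.

Lemma v_neq0 k : v k != 0.
Proof.
elim: k => [|k IH] /=; first exact: e_neq0.
by apply/eqP => /rho_eq0 h; move/eqP: IH.
Qed.

Lemma rank_span k : (forall i, (i < k)%N -> ~~ (v i <= span i)%MS) -> \rank (span k) = k.
Proof.
elim: k => [|k IH] h; first by rewrite /span big_ord0 mxrank0.
rewrite /span big_ord_recr /= -/(span k).
have := mxrank_sum_cap (span k) (<<v k>>)%MS.
have -> : \rank (<<v k>>)%MS = 1%N by rewrite genmxE rank_rV v_neq0.
rewrite IH; last by move=> i /ltnW; apply: h.
have -> : \rank (span k :&: <<v k>>)%MS = 0%N.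
  apply/eqP; rewrite mxrank_eq0; apply/negPn/negP => nz.
  have le := capmxSr (span k) (<<v k>>)%MS.
  have := mxrank_leqif_sup le; rewrite genmxE rank_rV v_neq0.
  have : (0 < \rank (span k :&: <<v k>>)%MS)%N by rewrite lt0n mxrank_eq0.
  move=> pos [h1 h2]; move: (h k (ltnSn k)); apply/negP/negPn.
  have : (<<v k>> <= span k :&: <<v k>>)%MS by rewrite -h2 eqn_leq h1 pos.
  by rewrite genmxE => /submx_trans; apply; exact: capmxSl.
by rewrite addn0 addn1 => ->.
Qed.

Lemma exists_fix : exists x : 'rV[K]_N.+1, x != 0 /\ tM x *m B = x.
Proof.
pose P k := (v k <= span k)%MS.
have exP : exists k, P k.
  case: (pickP (fun k : 'I_N.+2 => P k)) => [k Pk|none]; first by exists k.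
  have h : forall i, (i < N.+2)%N -> ~~ (v i <= span i)%MS.
    by move=> i lti; have := none (Ordinal lti); rewrite /P /= => ->.
  have := rank_leq_col (span N.+2); rewrite (rank_span _ h) ltnn.
  by [].
have [m Pm minm] := ex_minnP exP.
case: m Pm minm => [|m'] Pm minm.
  by move: Pm; rewrite /P /span big_ord0 submx0 /v /= (negbTE e_neq0).
move: Pm; rewrite /P /span => /sub_sumsmxP [u hu].
have : forall i : 'I_m'.+1, exists c, u i *m (<<v i>>)%MS = c *: v i.
  by move=> i; apply/sub_rVP; apply: submx_trans (submxMl _ _) _; rewrite genmxE.
move/fin_all_exists => [a ha].
have vm : v m'.+1 = \sum_(i < m'.+1) a i *: v i.
  by rewrite hu; apply: eq_bigr => i _; exact: ha.
pose aN j := a (inord j).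
have aNE : forall i : 'I_m'.+1, aN i = a i by move=> i; rewrite /aN inord_val.
have anz : exists k, (k <= m')%N /\ aN k != 0.
  case: (pickP (fun i : 'I_m'.+1 => a i != 0)) => [i hi | none].
    by exists i; split; [rewrite -ltnS | rewrite aNE].
  have := v_neq0 m'.+1; rewrite vm big1 ?eqxx // => i _.
  by have := none i; rewrite /= => /negbFE /eqP ->; rewrite scale0r.
pose d := (q - 2)%N.
have qd : q = (d + 2)%N by rewrite /d subnK //; exact: q_gt1.
pose H := fix Hf (i : nat) : {poly K} :=
  if i is i'.+1 then 'X^(q + d) * Hf i' ^+ q + (aN i)%:P * 'X^d
  else (aN 0%N)%:P * 'X^d.
have Xd0 : 'X^d != 0 :> {poly K} by rewrite monic_neq0 // monicXn.
have szC (c : K) : (size ((c%:P * 'X^d)%R : {poly K}) <= d.+1)%N.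
  by rewrite mul_polyC (leq_trans (size_scale_leq _ _)) // size_polyXn.
have Hnz : forall i, (exists k, (k <= i)%N /\ aN k != 0) -> H i != 0.
  elim=> [|i IH] [k [lek ak]].
    by move: lek ak; rewrite leqn0 => /eqP -> ak; rewrite /= mulf_neq0 // polyC_eq0.
  case: (eqVneq (H i) 0) => Hi.
    have ki : k = i.+1.
      apply/eqP; rewrite eqn_leq lek /=; rewrite ltnNge; apply/negP => kle.
      by move: (IH (ex_intro _ k (conj kle ak))); rewrite Hi eqxx.
    rewrite /= -/(H i) Hi expr0n /=; case: q q_gt0 => // q' _.
    by rewrite mulr0 add0r mulf_neq0 // polyC_eq0 -ki.
  have Hq : H i ^+ q != 0 by rewrite expf_neq0.
  have sz1 : size ('X^(q + d) * H i ^+ q) = (q + d + size (H i ^+ q))%N.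
    by rewrite mulrC size_mulXn.
  rewrite /= -/(H i) -size_poly_eq0 size_addl sz1.
    by rewrite -lt0n; apply: leq_trans q_gt0 _; rewrite -addnA leq_addr.
  by apply: leq_ltn_trans (szC _) _; lia.
have Hm : H m' != 0 by apply: Hnz.
pose G := 'X * H m' - 1.
have [z hz] : exists z, root G z.
  apply/closed_rootP; rewrite /G size_addl mulrC size_mulX //.
    by rewrite eqSS size_poly_eq0.
  by rewrite size_opp size_poly1 ltnS lt0n size_poly_eq0.
move: hz; rewrite /root /G !hornerE subr_eq0 => /eqP hz.
have z0 : z != 0 by apply/eqP => z0; move: hz; rewrite z0 mul0r => /eqP; rewrite eq_sym oner_eq0.
pose Y i := z ^+ 2 * (H i).[z].
have H0E : H 0%N = (aN 0%N)%:P * 'X^d by [].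
have HSE i : H i.+1 = 'X^(q + d) * H i ^+ q + (aN i.+1)%:P * 'X^d by [].
have Y0 : Y 0%N = aN 0%N * z ^+ q.
  by rewrite /Y H0E hornerCM hornerXn qd exprD; ring.
have YS i : Y i.+1 = Y i ^+ q + aN i.+1 * z ^+ q.
  rewrite /Y HSE hornerD hornerM hornerCM !hornerXn horner_exp exprMn.
  have e1 : z ^+ 2 * z ^+ (q + d) = z ^+ (2 * q) by rewrite -exprD; congr (_ ^+ _); lia.
  have e2 : z ^+ 2 * z ^+ d = z ^+ q by rewrite -exprD; congr (_ ^+ _); lia.
  by rewrite -exprM -e1 -e2; ring.
have Ym : Y m' = z by rewrite /Y expr2 -mulrA hz mulr1.
pose x := \sum_(i < m'.+1) Y i *: v i.
have fx : rho x = x.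
  rewrite /x rho_sum.
  under eq_bigr => i _ do rewrite rhoZ.
  rewrite big_ord_recr /= Ym.
  have -> : rho (v m') = v m'.+1 by [].
  rewrite vm big_ord_recl scalerDr big_ord_recl /= Y0.
  have -> : \sum_(i < m') Y (lift ord0 i) *: v (lift ord0 i)
      = \sum_(i < m') (Y i ^+ q *: rho (v i) + (z ^+ q * a (lift ord0 i)) *: v i.+1).
    apply: eq_bigr => i _; rewrite lift0 YS scalerDl; congr (_ + _).
    by rewrite -lift0 -aNE mulrC.
  rewrite big_split /= scaler_sumr.
  have -> : \sum_(i < m') z ^+ q *: (a (lift ord0 i) *: rho (v (0 + i)))
     = \sum_(i < m') (z ^+ q * a (lift ord0 i)) *: v i.+1.
    by apply: eq_bigr => i _; rewrite scalerA.
  have h0 : aN 0%N = a ord0 := aNE ord0.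
  by rewrite scalerA h0 [a ord0 * _]mulrC addrCA.
exists x; split; last exact: rho_fix.
apply/eqP => x0.
have : P m'.
  have : Y m' *: v m' = - \sum_(i < m') Y i *: v i.
    by apply/eqP; rewrite -addr_eq0 addrC -(big_ord_recr m' (fun i => Y i *: v i)) -/x x0.
  rewrite Ym => /(congr1 (fun w => z^-1 *: w)); rewrite scalerA mulVf // scale1r /P => ->.
  rewrite -scaleN1r !scalemx_sub //; apply: summx_sub => i _.
  rewrite scalemx_sub //; apply: (sumsmx_sup i) => //; by rewrite genmxE.
by move/minm; rewrite ltnn.
Qed.
End Step1.

Lemma lang N (B : 'M[K]_N) : B \in unitmx -> exists P, P \in unitmx /\ tM P *m B = P.
Proof.
elim: N B => [|N IH] B Bu.
  by exists 1%:M; split; [exact: unitmx1 | apply/matrixP => [[]]].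
have [x [x0 fx]] := exists_fix _ _ Bu.
have [j xj] : exists j, x 0 j != 0.
  case: (pickP (fun j => x 0 j != 0)) => [j h|none]; first by exists j.
  move/eqP: x0; case; apply/matrixP => i k; rewrite (ord1 i) mxE.
  by move/negbFE/eqP: (none k).
pose D : 'M[K]_(N, N.+1) := \matrix_(k, l) (l == lift j k)%:R.
pose Q : 'M[K]_(1 + N) := col_mx x D.
have Qu : Q \in unitmx.
  rewrite -row_free_unit -kermx_eq0; apply/rowV0P => w; rewrite sub_kermx => /eqP wQ.
  have wE := hsubmxK (w : 'rV_(1 + N)).
  move: wQ; rewrite -wE mul_row_col.
  set a := lsubmx w; set b := rsubmx w => wQ.
  have a0 : a = 0.
    move/matrixP: (wQ) => /(_ 0 j); rewrite !mxE big_ord1.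
    rewrite big1 ?addr0; last by move=> k _; rewrite [D k j]mxE (negbTE (neq_lift j k)) mulr0.
    by move/eqP; rewrite mulf_eq0 (negbTE xj) orbF => /eqP a00; apply/matrixP => i k; rewrite !ord1 [RHS]mxE.
  have b0 : b = 0.
    move: wQ; rewrite a0 mul0mx add0r => bD.
    apply/matrixP => i k; rewrite (ord1 i) [RHS]mxE.
    move/matrixP: bD => /(_ 0 (lift j k)); rewrite !mxE (bigD1 k) //= [D k _]mxE eqxx mulr1.
    rewrite big1 ?addr0 => [h|k' nk]; first by rewrite -h /b mxE.
    by rewrite [D k' _]mxE (inj_eq (@lift_inj _ j)) eq_sym (negbTE nk) mulr0.
  by rewrite a0 b0 row_mx0.
pose B' : 'M[K]_(1 + N) := tM Q *m B *m invmx Q.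
have QB : tM Q *m B = B' *m Q by rewrite /B' mulmxKV.
have B'u : B' \in unitmx.
  rewrite /B' !unitmx_mul Bu unitmx_inv Qu !andbT unitmxE det_map_mx unitfE.
  by rewrite /tauR tau_eq0 -unitfE -unitmxE.
have B'top : usubmx B' = row_mx 1%:M 0.
  rewrite /B' -!mul_usub_mx map_col_mx col_mxKu fx.
  have : usubmx (Q *m invmx Q) = x *m invmx Q by rewrite -mul_usub_mx col_mxKu.
  by rewrite mulmxV // (scalar_mx_block 1 N) /block_mx col_mxKu => <-.
have B'E : B' = block_mx 1%:M 0 (dlsubmx B') (drsubmx B').
  by rewrite -{1}[B']submxK /ulsubmx /ursubmx B'top row_mxKl row_mxKr.
have B''u : drsubmx B' \in unitmx.
  by move: B'u; rewrite {1}B'E !unitmxE det_lblock det1 mul1r.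
have [P'' [P''u fP'']] := IH _ B''u.
pose beta := tM P'' *m dlsubmx B'.
have : forall i : 'I_N, exists c, c - tau c = beta i 0 by move=> i; exact: artin_schreier.
move/fin_all_exists => [sf hs].
pose S : 'cV[K]_N := \col_i sf i.
pose P' : 'M[K]_(1 + N) := block_mx 1%:M 0 S P''.
have fP' : tM P' *m B' = P'.
  rewrite B'E /P' map_block_mx map_mx1 map_mx0 mulmx_block.
  rewrite !mul1mx !mul0mx !mulmx0 !addr0 add0r mulmx1 fP''; congr block_mx.
  apply/matrixP => i k; rewrite (ord1 k) !mxE /tauR -/(beta) .
  by have := hs i; rewrite /beta mxE => <-; rewrite addrC subrK.
have P'u : P' \in unitmx by rewrite unitmxE det_lblock det1 mul1r -unitmxE.
exists (P' *m Q); split; first by rewrite unitmx_mul P'u Qu.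
by rewrite map_mxM -mulmxA QB mulmxA fP'.
Qed.

Lemma tauD x y : tau (x + y) = tau x + tau y. Proof. exact: (rmorphD tauR). Qed.
Lemma tauM x y : tau (x * y) = tau x * tau y. Proof. exact: (rmorphM tauR). Qed.
Lemma tauN x : tau (- x) = - tau x. Proof. exact: (rmorphN tauR). Qed.

Definition Tp (b : {poly K}) : {poly K} := \poly_(j < size b) tau b`_j.

Lemma coef_Tp b j : (Tp b)`_j = tau b`_j.
Proof.
rewrite /Tp coef_poly; case: ltnP => // h.
by rewrite nth_default // tau0.
Qed.

Lemma TpD b c : Tp (b + c) = Tp b + Tp c.
Proof. by apply/polyP => j; rewrite coefD !coef_Tp coefD tauD. Qed.

Lemma TpC a b : Tp (a%:P * b) = (tau a)%:P * Tp b.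
Proof. by apply/polyP => j; rewrite coefCM !coef_Tp coefCM tauM. Qed.

Lemma Tp_eq0 b : Tp b = 0 -> b = 0.
Proof.
move=> h; apply/polyP => j; move/polyP: h => /(_ j); rewrite coef_Tp coef0.
by move/eqP; rewrite tau_eq0 => /eqP.
Qed.

Lemma skmulX b : skmul tau 'X b = Tp b * 'X.
Proof.
rewrite /skmul size_polyX !big_ord_recl big_ord0 addr0 /=.
rewrite big1 ?add0r; last by move=> j _; rewrite coefX /= mul0r scale0r.
rewrite /Tp poly_def mulr_suml; apply: eq_bigr => j _.
by rewrite coefX /= mul1r -scalerAl -exprSr.
Qed.

Lemma skmulC c b : skmul tau c%:P b = c%:P * b.
Proof.
rewrite /skmul size_polyC; case: eqP => [->|_] /=.
  by rewrite big_ord0 mul0r.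
rewrite big_ord1 /= -[in RHS](coefK b) poly_def mulr_sumr; apply: eq_bigr => j _.
by rewrite coefC /= mul_polyC scalerA.
Qed.

Lemma skmulXm1 b : skmul tau ('X - 1) b = Tp b * 'X - b.
Proof.
rewrite /skmul -polyC1 size_XsubC !big_ord_recl big_ord0 addr0 /=.
rewrite addrC; congr (_ + _).
  rewrite /Tp poly_def mulr_suml; apply: eq_bigr => j _.
  by rewrite coefB coefX coefC /= subr0 mul1r -scalerAl -exprSr.
rewrite -[in RHS](coefK b) poly_def -sumrN; apply: eq_bigr => j _.
by rewrite coefB coefX coefC /= sub0r mulN1r scaleNr.
Qed.

Definition Sv r (v : 'rV[{poly K}]_r) := map_mx (fun p => Tp p * 'X) v.
Arguments Sv {r} v.

Lemma smulX r (v : 'rV[{poly K}]_r) : smul tau 'X v = Sv v.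
Proof. by apply: eq_map_mx => p; exact: skmulX. Qed.
Lemma smulC r c (v : 'rV[{poly K}]_r) : smul tau c%:P v = c%:P *: v.
Proof. by apply/matrixP => i j; rewrite !mxE skmulC. Qed.
Lemma smulXm1 r (v : 'rV[{poly K}]_r) : smul tau ('X - 1) v = Sv v - v.
Proof. by apply/matrixP => i j; rewrite !mxE skmulXm1. Qed.

Lemma SvD r (v w : 'rV_r) : Sv (v + w) = Sv v + Sv w.
Proof. by apply/matrixP => i j; rewrite !mxE TpD mulrDl. Qed.
Lemma Sv0 r : Sv (0 : 'rV_r) = 0.
Proof.
apply/matrixP => i j; rewrite !mxE.
have -> : Tp 0 = 0 by apply/polyP => k; rewrite coef_Tp !coef0 tau0.
by rewrite mul0r.
Qed.
Lemma SvN r (v : 'rV_r) : Sv (- v) = - Sv v.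
Proof. by apply/eqP; rewrite -addr_eq0 -SvD addNr Sv0. Qed.
Lemma SvB r (v w : 'rV_r) : Sv (v - w) = Sv v - Sv w.
Proof. by rewrite SvD SvN. Qed.
Lemma Sv_sum r m (G : 'I_m -> 'rV_r) : Sv (\sum_(i < m) G i) = \sum_(i < m) Sv (G i).
Proof. exact: (big_morph _ (@SvD r) (@Sv0 r)). Qed.
Lemma SvC r c (v : 'rV_r) : Sv (c%:P *: v) = (tau c)%:P *: Sv v.
Proof. by apply/matrixP => i j; rewrite !mxE TpC mulrA. Qed.
Lemma Sv_eq0 r (v : 'rV_r) : Sv v = 0 -> v = 0.
Proof.
move/matrixP => h; apply/matrixP => i j; move: (h i j); rewrite !mxE => /eqP.
by rewrite mulf_eq0 polyX_eq0 orbF => /eqP /Tp_eq0.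
Qed.
Lemma Svm1_eq0 r (v : 'rV_r) : Sv v - v = 0 -> v = 0.
Proof.
move/matrixP => h; apply/matrixP => i j; move: (h i j); rewrite !mxE => /eqP.
rewrite subr_eq0 => /eqP e; apply/polyP => k; rewrite coef0.
elim: k => [|k IH].
  by rewrite -e coefMX.
by rewrite -e coefMX /= coef_Tp IH tau0.
Qed.

Lemma fix_count n (B : 'M[K]_n) m (c : 'I_m -> 'rV[K]_n) :
  (forall i, tM (c i) *m B = c i) -> injective c -> (m <= q ^ \rank B)%N.
Proof.
move=> cfix cinj.
pose X : 'M[K]_(m, n) := \matrix_i c i.
have XB : tM X *m B = X.
  by apply/row_matrixP => i; rewrite row_mul -map_row rowK cfix.
have rXB : (\rank X <= \rank B)%N by rewrite -{1}XB mxrankM_maxr.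
pose T := rowsub (maxrankfun X) X.
have Tfree : row_free T := maxrowsub_free X.
have TB : tM T *m B = T.
  have -> : tM T = rowsub (maxrankfun X) (tM X) by apply/matrixP => i j; rewrite !mxE.
  by rewrite mul_rowsub_mx XB.
have : forall i, exists a : 'rV[K]_(\rank X), c i = a *m T.
  move=> i; apply/submxP; rewrite (eq_maxrowsub X); rewrite -(rowK c i); exact: row_sub.
move/fin_all_exists => [a ha].
have afix i : tM (a i) = a i.
  by apply: (row_free_inj Tfree); rewrite /= -{1}TB mulmxA -map_mxM -ha cfix ha.
have : forall i, exists phi : 'I_(\rank X) -> F, forall k, gF (phi k) = a i 0 k.
  move=> i.
  have h : forall k, exists x, gF x = a i 0 k.
    move=> k; apply: fix_gF; apply/eqP; rewrite -tau_fix.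
    by move/matrixP: (afix i) => /(_ 0 k); rewrite mxE /tauR => ->.
  by have [phi hp] := fin_all_exists h; exists phi.
move/fin_all_exists => [phi hphi].
pose G i : {ffun 'I_(\rank X) -> F} := [ffun k => phi i k].
have Ginj : injective G.
  move=> i j /ffunP h; apply: cinj; rewrite !ha; congr (_ *m _).
  apply/matrixP => i0 k; rewrite !(ord1 i0) -!hphi.
  by move: (h k); rewrite !ffunE => ->.
have := leq_card G Ginj; rewrite card_ord card_ffun card_ord => le.
by apply: (leq_trans le); rewrite leq_exp2l // q_gt1.
Qed.

Lemma fix_many n (B : 'M[K]_n) : B \in unitmx ->
  exists c : 'I_(q ^ n) -> 'rV[K]_n, (forall i, tM (c i) *m B = c i) /\ injective c.
Proof.
move=> Bu; have [P [Pu PB]] := lang _ _ Bu.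
have cardE : #|{ffun 'I_n -> F}| = (q ^ n)%N by rewrite card_ffun card_ord.
pose idx (i : 'I_(q ^ n)) : {ffun 'I_n -> F} := enum_val (cast_ord (esym cardE) i).
have idx_inj : injective idx.
  by move=> i j /enum_val_inj /cast_ord_inj.
pose vec (phi : {ffun 'I_n -> F}) : 'rV[K]_n := \row_k gF (phi k).
exists (fun i => vec (idx i) *m P); split.
  move=> i; rewrite map_mxM -mulmxA PB; congr (_ *m _).
  by apply/matrixP => i0 k; by rewrite !mxE; exact: tau_gF.
move=> i j /(row_free_inj _) h; apply: idx_inj; apply/ffunP => k.
have := h; rewrite row_free_unit => /(_ Pu) /matrixP /(_ 0 k); rewrite !mxE.
exact: gF_inj.
Qed.

Section Mod.
Variables (r0 r1 : nat) (f : 'rV[{poly K}]_r0 -> 'rV[{poly K}]_r1).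
Hypothesis Hf : skew_hom tau f.
Hypothesis finj : injective f.
Variables (n : nat) (w : 'I_n -> 'rV[{poly K}]_r1).
Hypothesis wspan : forall x, exists (c : 'I_n -> K) (v : 'rV[{poly K}]_r0),
        x = \sum_(i < n) (c i)%:P *: w i + f v.
Hypothesis wind : forall c : 'I_n -> K,
        (exists v, \sum_(i < n) (c i)%:P *: w i = f v) -> forall i, c i = 0.

Lemma fD v v' : f (v + v') = f v + f v'. Proof. exact: Hf.1. Qed.
Lemma f0 : f 0 = 0.
Proof. by apply: (addrI (f 0)); rewrite -fD !addr0. Qed.
Lemma fN v : f (- v) = - f v.
Proof. by apply/eqP; rewrite -addr_eq0 -fD addNr f0. Qed.
Lemma fB v v' : f (v - v') = f v - f v'. Proof. by rewrite fD fN. Qed.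
Lemma f_sum m (G : 'I_m -> _) : f (\sum_(i < m) G i) = \sum_(i < m) f (G i).
Proof. exact: (big_morph _ fD f0). Qed.
Lemma fS v : f (Sv v) = Sv (f v). Proof. by rewrite -!smulX Hf.2. Qed.
Lemma fC c v : f (c%:P *: v) = c%:P *: f v. Proof. by rewrite -!smulC Hf.2. Qed.

Definition comb (c : 'rV[K]_n) := \sum_(i < n) (c 0 i)%:P *: w i.

Lemma combD c c' : comb (c + c') = comb c + comb c'.
Proof. by rewrite /comb -big_split; apply: eq_bigr => i _; rewrite mxE polyCD scalerDl. Qed.
Lemma comb0 : comb 0 = 0.
Proof. by rewrite /comb big1 // => i _; rewrite mxE scale0r. Qed.
Lemma combN c : comb (- c) = - comb c.
Proof. by apply/eqP; rewrite -addr_eq0 -combD addNr comb0. Qed.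
Lemma combB c c' : comb (c - c') = comb c - comb c'. Proof. by rewrite combD combN. Qed.
Lemma combZ a c : comb (a *: c) = a%:P *: comb c.
Proof. by rewrite /comb scaler_sumr; apply: eq_bigr => i _; rewrite mxE polyCM scalerA. Qed.
Lemma comb_sum m (G : 'I_m -> 'rV_n) : comb (\sum_(i < m) G i) = \sum_(i < m) comb (G i).
Proof. exact: (big_morph _ combD comb0). Qed.

Lemma decomp x : exists c v, x = comb c + f v.
Proof.
have [c [v ->]] := wspan x; exists (\row_i c i), v; congr (_ + _).
by apply: eq_bigr => i _; rewrite mxE.
Qed.

Lemma comb_f c v : comb c = f v -> c = 0.
Proof.
move=> h; apply/matrixP => i j; rewrite (ord1 i) mxE.
by apply: (wind (fun j => c 0 j)); exists v.
Qed.

Lemma comb_uniq c c' v v' : comb c + f v = comb c' + f v' -> c = c' /\ v = v'.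
Proof.
move=> h.
have : comb (c - c') = f (v' - v).
  by rewrite combB fB; apply/eqP; rewrite subr_eq addrAC eq_sym subr_eq addrC h.
move/comb_f/eqP; rewrite subr_eq0 => /eqP cc; split => //.
by apply: finj; move: h; rewrite cc => /addrI.
Qed.

Variables (B : 'M[K]_n) (U : 'I_n -> 'rV[{poly K}]_r0).
Hypothesis hBU : forall j, Sv (w j) = comb (row j B) + f (U j).

Lemma S_comb c : Sv (comb c) = comb (tM c *m B) + f (\sum_j (tau (c 0 j))%:P *: U j).
Proof.
have -> : Sv (comb c) = \sum_j (tau (c 0 j))%:P *: Sv (w j).
  by rewrite /comb Sv_sum; apply: eq_bigr => j _; rewrite SvC.
under eq_bigr => j _ do rewrite hBU scalerDr.
rewrite big_split /= f_sum; congr (_ + _); last by apply: eq_bigr => j _; rewrite fC.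
rewrite mulmx_sum_row comb_sum; apply: eq_bigr => j _.
by rewrite combZ mxE.
Qed.

Definition kerR v c := exists h u, f v = Sv h - h /\ h = comb c + f u.

Lemma ker_fix v : in_aH tau ('X - 1) (f v) -> exists c, tM c *m B = c /\ kerR v c.
Proof.
case=> h0; rewrite smulXm1 => hv.
have [c [u hE]] := decomp h0.
exists c; split; last by exists h0, u.
have : comb (tM c *m B - c) + f (\sum_j (tau (c 0 j))%:P *: U j + Sv u - u) = comb 0 + f v.
  rewrite hv hE SvD S_comb -fS comb0 add0r combB !fB fD; rewrite !opprD !addrA.
  by rewrite (addrAC _ (- comb c)) (addrAC _ (- comb c)).
by case/comb_uniq => /eqP; rewrite subr_eq0 => /eqP.
Qed.

Lemma fix_ker c : tM c *m B = c -> exists v, in_aH tau ('X - 1) (f v) /\ kerR v c.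
Proof.
move=> cf; exists (\sum_j (tau (c 0 j))%:P *: U j).
have e : f (\sum_j (tau (c 0 j))%:P *: U j) = Sv (comb c) - comb c.
  by rewrite S_comb cf addrC addKr.
split; first by exists (comb c); rewrite smulXm1.
by exists (comb c), 0; rewrite f0 addr0.
Qed.

Lemma kerR_cong v v' c c' : kerR v c -> kerR v' c' ->
  (c = c' <-> cong_mod_sm1 tau v v').
Proof.
case=> h [u [hv hE]] [h' [u' [hv' hE']]]; split.
  move=> cc; exists (u - u'); rewrite smulXm1; apply: finj.
  have hh : h - h' = f (u - u') by rewrite hE hE' cc fB opprD addrACA subrr add0r.
  by rewrite fB hv hv' fB fS -hh SvB subACA.
case=> u0; rewrite smulXm1 => e.
have : Sv (h - h' - f u0) - (h - h' - f u0) = 0.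
  rewrite !SvB -fS subACA [Sv h - Sv h' - _]subACA -hv -hv' -!fB e.
  by rewrite fB subrr.
move/Svm1_eq0 => /eqP; rewrite subr_eq0 hE hE' => /eqP e2.
have : comb (c - c') = f (u0 - u + u').
  by rewrite combB fD fB; apply: zmod_aux.
by move/comb_f/eqP; rewrite subr_eq0 => /eqP.
Qed.

Lemma msb_unit : mod_sigma_bijective tau f -> B \in unitmx.
Proof.
case=> minj _; apply/negPn/negP => nB.
have : kermx B != 0 by rewrite kermx_eq0 row_free_unit.
case/rowV0Pn => d /sub_kermxP dB dnz.
pose c := fM d.
have e : Sv (comb c) = f (\sum_j (tau (c 0 j))%:P *: U j).
  by rewrite S_comb /c tM_fM dB comb0 add0r.
have [u' hu'] : in_aH tau 'X (\sum_j (tau (c 0 j))%:P *: U j - 0).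
  by apply: minj; exists (comb c); rewrite smulX f0 subr0 e.
move: hu'; rewrite subr0 smulX => hu'.
have : Sv (comb c - f u') = 0 by rewrite SvB e hu' fS subrr.
move/Sv_eq0/eqP; rewrite subr_eq0 => /eqP /comb_f c0.
by move: dnz; rewrite -(tM_fM _ _ d) -/c c0 map_mx0 eqxx.
Qed.

Lemma unit_msb : B \in unitmx -> mod_sigma_bijective tau f.
Proof.
move=> Bu; split.
  move=> v v' [h0]; rewrite smulX => e.
  have [c [u hE]] := decomp h0.
  have : comb (tM c *m B) + f (\sum_j (tau (c 0 j))%:P *: U j + Sv u) = comb 0 + f (v - v').
    by rewrite comb0 add0r fB e hE SvD S_comb fD fS addrA.
  case/comb_uniq => h1 h2.
  have c0 : c = 0.
    have : tM c = 0 by rewrite -(mulmxK Bu (tM c)) h1 mul0mx.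
    by move=> h; rewrite -(fM_tM _ _ c) h map_mx0.
  exists u; rewrite smulX -h2 c0 big1 ?add0r // => j _.
  by rewrite mxE tau0 scale0r.
move=> x; have [c [v ->]] := decomp x.
pose d := fM (c *m invmx B).
have dB : tM d *m B = c by rewrite /d tM_fM mulmxKV.
exists (v - \sum_j (tau (d 0 j))%:P *: U j); exists (comb d).
by rewrite smulX S_comb dB fB opprB addrA (addrAC (comb c)) addrK.
Qed.

Lemma kerfam_count m (x : 'I_m -> 'rV_r0) :
  (forall i, ker_mod_sm1 tau f (x i)) ->
  (forall i j, i != j -> ~ cong_mod_sm1 tau (x i) (x j)) -> (m <= q ^ \rank B)%N.
Proof.
move=> xker xnc.
have : forall i, exists c, tM c *m B = c /\ kerR (x i) c by move=> i; apply: ker_fix; exact: xker.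
case/fin_all_exists => c hc.
apply: (@fix_count _ _ _ c); first by move=> i; case: (hc i).
move=> i j cij; apply/eqP; apply/negPn/negP => ne; apply: (xnc i j ne).
by apply: (proj1 (kerR_cong _ _ _ _ (hc i).2 (hc j).2)).
Qed.

Lemma main_BU :
  quot_card_le (ker_mod_sm1 tau f) (@cong_mod_sm1 K tau r0) (q ^ n)%N /\
  (quot_card_eq (ker_mod_sm1 tau f) (@cong_mod_sm1 K tau r0) (q ^ n)%N
     <-> mod_sigma_bijective tau f).
Proof.
have le : quot_card_le (ker_mod_sm1 tau f) (@cong_mod_sm1 K tau r0) (q ^ n)%N.
  move=> m x xker xnc; apply: (leq_trans (kerfam_count _ _ xker xnc)).
  by rewrite leq_exp2l ?q_gt1 // rank_leq_row.
split => //; split.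
  case=> _ [x [xker xnc]]; apply: unit_msb.
  have := kerfam_count _ _ xker xnc; rewrite leq_exp2l ?q_gt1 // => h.
  by rewrite -row_free_unit /row_free eqn_leq rank_leq_row.
move/msb_unit => Bu; split => //.
have [c [cfix cinj]] := fix_many _ _ Bu.
have : forall i, exists v, ker_mod_sm1 tau f v /\ kerR v (c i) by move=> i; exact: fix_ker.
case/fin_all_exists => x hx.
exists x; split; first by move=> i; case: (hx i).
move=> i j ne cg; move/eqP: ne; apply; apply: cinj.
exact: (proj2 (kerR_cong _ _ _ _ (hx i).2 (hx j).2)).
Qed.

End Mod.

End Frob.

Theorem lemma4
  (F : finFieldType)                          (* F = F_q, q = #|F| *)
  (K : closedFieldType)                       (* K = kbar *)
  (iota : {rmorphism {fraction {poly F}} -> K})   (* k = F_q(T) -> kbar *)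
  (Kalg : forall x : K, exists p : {poly {fraction {poly F}}},
            p != 0 /\ root (map_poly iota p) x)
  (tau : K -> K) (Htau : forall x : K, tau x ^+ #|F| = x)   (* tau x = x^(1/q) *)
  (r0 r1 : nat) (f : 'rV[{poly K}]_r0 -> 'rV[{poly K}]_r1)
  (Hf : skew_hom tau f) (Hinj : injective f)
  (n : nat) (Hn : coker_dim f n) :
  quot_card_le (ker_mod_sm1 tau f) (@cong_mod_sm1 K tau r0) (#|F| ^ n)%N /\
  (quot_card_eq (ker_mod_sm1 tau f) (@cong_mod_sm1 K tau r0) (#|F| ^ n)%N
     <-> mod_sigma_bijective tau f).
Proof.
case: Hn => w [wspan wind].
have : forall j, exists p : 'rV[K]_n * 'rV[{poly K}]_r0,
    Sv K tau r1 (w j) = comb K r1 n w p.1 + f p.2.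
  move=> j; have [c [u e]] := decomp K r0 r1 f n w wspan (Sv K tau r1 (w j)).
  by exists (c, u).
case/fin_all_exists => bu hbu.
apply: (main_BU F K iota tau Htau r0 r1 f Hf Hinj n w wspan wind
          (\matrix_j (bu j).1) (fun j => (bu j).2)).
by move=> j; rewrite rowK hbu.
Qed.
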